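(* Let $\ell>0$ and $\Omega_\ell=(0,\pi)\times(-\ell,\ell)$. Consider the eigenvalue problem \[ \begin{cases} \Delta^2 u=-\lambda \Delta u, & \text{in }\Omega_\ell,\\ u=0, & \text{on }\partial\Omega_\ell,\\ u_y=0, & \text{on }(0,\pi)\times\{-\ell,\ell\},\\ u_{xx}=0, & \text{on }\{0,\pi\}\times(-\ell,\ell). \end{cases} \] Then for every $k,m\in\mathbb N^*=\{1,2,\dots\}$ there exists a unique $\gamma_{k,m}\in\left(\frac{k\pi}{2\ell},\frac{(k+1)\pi}{2\ell}\right)$ satisfying $\gamma\tan(\gamma\ell)=-m\tanh(m\ell)$ if $k$ is odd, and $\frac{\tan(\gamma\ell)}{\gamma}=\frac{\tanh(m\ell)}{m}$ if $k$ is even. Setting $\lambda_{k,m}=m^2+\gamma_{k,m}^2$, the problem above admits the eigenfunction \[ u_{k,m}(x,y)=h_{k,m}(y)\sin(mx) \] with eigenvalue $\lambda_{k,m}$, where $h_{k,m}$ is a nontrivial solution of \[ \begin{cases} h^{(iv)}(y)+(\lambda-2m^2)h''(y)+m^2(m^2-\lambda)h(y)=0, & y\in(-\ell,\ell),\\ h(-\ell)=h(\ell)=0,\\ h'(-\ell)=h'(\ell)=0, \end{cases} \] with $\lambda=\lambda_{k,m}$; explicitly, with $\gamma=\gamma_{k,m}$, $h_{k,m}(y)=\cosh(my)-\frac{\cosh(m\ell)}{\cos(\gamma\ell)}\cos(\gamma y)$ if $k$ is odd and $h_{k,m}(y)=\sinh(my)-\frac{\sinh(m\ell)}{\sin(\gamma\ell)}\sin(\gamma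 y)$ if $k$ is even. Moreover: (a) if $k$ is odd then $h_{k,m}$ is even, and if $k$ is even then $h_{k,m}$ is odd; (b) if $k=1$ then $h_{1,m}$ is strictly positive on $(-\ell,\ell)$.
   Context: $\Delta$ denotes the Laplacian in $\mathbb R^2$ with coordinates $(x,y)$; subscripts denote partial derivatives. *)

(* Defs.v *)
From Stdlib Require Import Reals Lra.
Open Scope R_scope.

Definition dx (u w : R -> R -> R) : Prop :=
  forall x y, derivable_pt_lim (fun t => u t y) x (w x y).
Definition dy (u w : R -> R -> R) : Prop :=
  forall x y, derivable_pt_lim (fun t => u x t) y (w x y).

Definition laplacian_is (u L : R -> R -> R) : Prop :=
  exists ux uxx uy uyy,
    dx u ux /\ dx ux uxx /\ dy u uy /\ dy uy uyy /\
    forall x y, L x y = uxx x y + uyy x y.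

Definition in_Omega (l x y : R) : Prop := 0 < x < PI /\ - l < y < l.

Definition on_boundary (l x y : R) : Prop :=
  ((x = 0 \/ x = PI) /\ - l <= y <= l) \/ (0 <= x <= PI /\ (y = - l \/ y = l)).

Definition gamma_eq (k m : nat) (l g : R) : Prop :=
  if Nat.odd k then g * tan (g * l) = - (INR m * tanh (INR m * l))
  else tan (g * l) / g = tanh (INR m * l) / INR m.

Definition h_fun (k m : nat) (l g : R) (y : R) : R :=
  if Nat.odd k then cosh (INR m * y) - cosh (INR m * l) / cos (g * l) * cos (g * y)
  else sinh (INR m * y) - sinh (INR m * l) / sin (g * l) * sin (g * y).

Definition u_fun (k m : nat) (l g : R) (x y : R) : R :=
  h_fun k m l g y * sin (INR m * x).

(* Main.v *)
Require Import Defs.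
From Stdlib Require Import Reals Lra Lia.
From Coquelicot Require Import Coquelicot.
Open Scope R_scope.

Lemma D_cosh a y : derivable_pt_lim (fun t => cosh (a*t)) y (a * sinh (a*y)).
Proof. apply is_derive_Reals. unfold cosh, sinh. auto_derive. auto. field. Qed.
Lemma D_sinh a y : derivable_pt_lim (fun t => sinh (a*t)) y (a * cosh (a*y)).
Proof. apply is_derive_Reals. unfold cosh, sinh. auto_derive. auto. field. Qed.
Lemma D_mcos a y : derivable_pt_lim (fun t => a * cos (a*t)) y (- (a * a * sin (a*y))).
Proof. apply is_derive_Reals. auto_derive. auto. ring. Qed.
Lemma D_sin a y : derivable_pt_lim (fun t => sin (a*t)) y (a * cos (a*y)).
Proof. apply is_derive_Reals. auto_derive. auto. ring. Qed.

Lemma dx_prod (H f f1 : R -> R): (forall x, derivable_pt_lim f x (f1 x)) ->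
  dx (fun x y => H y * f x) (fun x y => H y * f1 x).
Proof. intros Hf x y. apply is_derive_Reals. apply is_derive_scal. apply is_derive_Reals. auto. Qed.
Lemma dy_prod (H H1 f : R -> R): (forall y, derivable_pt_lim H y (H1 y)) ->
  dy (fun x y => H y * f x) (fun x y => H1 y * f x).
Proof. intros Hf x y. apply is_derive_Reals.
  apply (is_derive_ext (fun t => f x * H t)). intro t; apply Rmult_comm.
  replace (H1 y * f x) with (f x * H1 y) by ring.
  apply is_derive_scal. apply is_derive_Reals. auto. Qed.
Lemma lap_prod (H H1 H2 f f1 f2 : R -> R) (L : R -> R -> R):
  (forall y, derivable_pt_lim H y (H1 y)) -> (forall y, derivable_pt_lim H1 y (H2 y)) ->
  (forall x, derivable_pt_lim f x (f1 x)) -> (forall x, derivable_pt_lim f1 x (f2 x)) ->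
  (forall x y, L x y = H y * f2 x + H2 y * f x) ->
  laplacian_is (fun x y => H y * f x) L.
Proof.
  intros. exists (fun x y => H y * f1 x), (fun x y => H y * f2 x),
    (fun x y => H1 y * f x), (fun x y => H2 y * f x).
  repeat split; try apply dx_prod; try apply dy_prod; auto.
Qed.

Lemma cos_shift n x : cos (x + INR n * PI) = (-1)^n * cos x.
Proof. induction n. simpl. rewrite Rmult_0_l, Rplus_0_r; ring.
  rewrite S_INR. replace (x + (INR n + 1) * PI) with ((x + INR n * PI) + PI) by ring.
  rewrite neg_cos, IHn. simpl. ring. Qed.
Lemma sin_shift n x : sin (x + INR n * PI) = (-1)^n * sin x.
Proof. induction n. simpl. rewrite Rmult_0_l, Rplus_0_r; ring.
  rewrite S_INR. replace (x + (INR n + 1) * PI) with ((x + INR n * PI) + PI) by ring.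
  rewrite neg_sin, IHn. simpl. ring. Qed.
Lemma m1_pow n : (-1)^n = 1 \/ (-1)^n = -1.
Proof. induction n; simpl. auto. destruct IHn as [-> | ->]; lra. Qed.

Lemma trig_nz1 j t : INR j * PI < t < INR j * PI + PI/2 -> sin t <> 0 /\ cos t <> 0.
Proof. intros Ht. set (x := t - INR j * PI).
  replace t with (x + INR j * PI) by (unfold x; ring).
  rewrite sin_shift, cos_shift.
  assert (0 < sin x) by (apply sin_gt_0; unfold x; lra).
  assert (0 < cos x) by (apply cos_gt_0; unfold x; lra).
  destruct (m1_pow j) as [-> | ->]; split; lra. Qed.
Lemma trig_nz2 j t : INR j * PI + PI/2 < t < INR j * PI + PI -> sin t <> 0 /\ cos t <> 0.
Proof. intros Ht. set (x := t - INR j * PI).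
  replace t with (x + INR j * PI) by (unfold x; ring).
  rewrite sin_shift, cos_shift.
  assert (0 < sin x) by (apply sin_gt_0; unfold x; lra).
  assert (cos x < 0) by (apply cos_lt_0; unfold x; lra).
  destruct (m1_pow j) as [-> | ->]; split; lra. Qed.

Lemma cosh_pos x : 0 < cosh x.
Proof. unfold cosh. pose proof (exp_pos x); pose proof (exp_pos (-x)); lra. Qed.
Lemma sinh_pos x : 0 < x -> 0 < sinh x.
Proof. intro. unfold sinh. pose proof (exp_increasing (-x) x). lra. Qed.
Lemma sinh_opp x : sinh (-x) = - sinh x.
Proof. unfold sinh. rewrite Ropp_involutive. field. Qed.
Lemma cosh_opp x : cosh (-x) = cosh x.
Proof. unfold cosh. rewrite Ropp_involutive. field. Qed.
Lemma PI_gt3 : 3 < PI.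
Proof. pose proof PI2_3_2. lra. Qed.

Lemma cont_of_der (f f' : R -> R) : (forall x, derivable_pt_lim f x (f' x)) -> continuity f.
Proof. intros H x. apply derivable_continuous_pt. exists (f' x). apply H. Qed.
Lemma int_scale l a b g : 0 < l -> a/(2*l) < g < b/(2*l) -> a/2 < g*l < b/2.
Proof. intros hl [H1 H2]. assert (E1: a/(2*l)*l = a/2) by (field; lra).
  assert (E2: b/(2*l)*l = b/2) by (field; lra). split; nra. Qed.

Lemma D_gtan l g : cos (g*l) <> 0 ->
  derivable_pt_lim (fun g => g * tan (g*l)) g (tan (g*l) + g*l*(1+tan (g*l)^2)).
Proof. intro Hc. apply is_derive_Reals. unfold tan. auto_derive. auto. field. auto. Qed.

Lemma D_tang l g : cos (g*l) <> 0 -> g <> 0 ->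
  derivable_pt_lim (fun g => tan (g*l) / g) g ((g*l*(1+tan (g*l)^2) - tan (g*l))/ g^2).
Proof. intros Hc Hg. apply is_derive_Reals. unfold tan. auto_derive. auto. field. auto. Qed.

Lemma gamma_odd l (hl:0<l) j a (ha:0<a) :
 exists g, (2*INR j+1)*PI/(2*l) < g < (2*INR j+1+1)*PI/(2*l) /\ g*tan(g*l) = -a /\
   forall g', (2*INR j+1)*PI/(2*l) < g' < (2*INR j+1+1)*PI/(2*l) -> g'*tan(g'*l) = -a -> g' = g.
Proof.
  pose proof PI_gt3 as HPI. pose proof (pos_INR j) as Hj.
  set (g0 := (2*INR j+1)*PI/(2*l)). set (g1 := (2*INR j+1+1)*PI/(2*l)).
  assert (Hin : forall g, g0 <= g <= g1 -> g <> g0 -> g <> g1 ->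
     INR j * PI + PI/2 < g*l < INR j * PI + PI).
  { intros g Hg H0 H1. assert (g0 < g < g1) by lra.
    pose proof (int_scale l _ _ g hl H). lra. }
  assert (Hg0 : 0 < g0) by (unfold g0; apply Rdiv_lt_0_compat; nra).
  assert (Hg01 : g0 < g1) by (unfold g0, g1; apply Rmult_lt_compat_r;
     [apply Rinv_0_lt_compat; lra | nra]).
  assert (U : forall g g', g0 < g < g1 -> g0 < g' < g1 -> g*tan(g*l) = -a ->
            g'*tan(g'*l) = -a -> ~ g < g').
  { intros g g' Hg Hg' E E' Hlt.
    destruct (MVT_cor2 (fun g => g * tan (g*l))
      (fun g => tan (g*l) + g*l*(1+tan (g*l)^2)) g g' Hlt) as [c [Ec Hc]].
    { intros c Hc. apply D_gtan. apply (trig_nz2 j). apply Hin; lra. }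
    simpl in Ec. rewrite E, E' in Ec.
    assert (Hcl : INR j * PI + PI/2 < c*l < INR j * PI + PI) by (apply Hin; lra).
    assert (1 < c*l) by nra.
    set (T := tan (c*l)) in Ec.
    assert (0 <= (c*l-1)*(1+T^2)) by (apply Rmult_le_pos; nra).
    assert (0 < T + c*l*(1+T^2)) by nra.
    nra. }
  set (F := fun g => g*sin(g*l) + a*cos(g*l)).
  assert (CF : continuity F).
  { apply (cont_of_der _ (fun g => sin(g*l) + g*(cos(g*l)*l) - a*(sin(g*l)*l))).
    intro x; apply is_derive_Reals; unfold F; auto_derive; auto; ring. }
  assert (F0 : F g0 = g0 * (-1)^j).
  { unfold F. replace (g0*l) with (PI/2 + INR j * PI) by (unfold g0; field; lra).
    rewrite sin_shift, cos_shift, sin_PI2, cos_PI2. ring. }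
  assert (F1 : F g1 = - a * (-1)^j).
  { unfold F. replace (g1*l) with (0 + INR (S j) * PI) by (unfold g1; rewrite S_INR; field; lra).
    rewrite sin_shift, cos_shift, sin_0, cos_0. simpl. ring. }
  destruct (IVT_gen F g0 g1 0 CF) as [x [Hx Fx]].
  { rewrite F0, F1. unfold Rmin, Rmax.
    destruct (m1_pow j) as [-> | ->]; destruct Rle_dec; lra. }
  rewrite Rmin_left, Rmax_right in Hx by lra.
  assert (x <> g0) by (intro; subst x; rewrite F0 in Fx; destruct (m1_pow j) as [E|E]; rewrite E in Fx; lra).
  assert (x <> g1) by (intro; subst x; rewrite F1 in Fx; destruct (m1_pow j) as [E|E]; rewrite E in Fx; lra).
  assert (Hxl := Hin x Hx H H0).
  destruct (trig_nz2 j (x*l)) as [Hs Hc]; [lra|].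
  assert (Ex : x * tan (x*l) = -a).
  { unfold tan. unfold F in Fx.
    replace (x * (sin (x*l) / cos (x*l))) with ((x*sin(x*l))/cos(x*l)) by (field; auto).
    replace (x*sin(x*l)) with (-a*cos(x*l)) by lra. field; auto. }
  exists x. split; [lra|]. split; [exact Ex|].
  intros g' Hg' E'. destruct (Rtotal_order g' x) as [Hl|[He|Hl]]; auto.
  - exfalso. apply (U g' x); auto; lra.
  - exfalso. apply (U x g'); auto; lra.
Qed.
Lemma gamma_even l (hl:0<l) j (hj : (1 <= j)%nat) c (hc:0<c) :
 exists g, (2*INR j)*PI/(2*l) < g < (2*INR j+1)*PI/(2*l) /\ tan(g*l)/g = c /\
   forall g', (2*INR j)*PI/(2*l) < g' < (2*INR j+1)*PI/(2*l) -> tan(g'*l)/g' = c -> g' = g.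
Proof.
  pose proof PI_gt3 as HPI. assert (Hj : 1 <= INR j) by (apply (le_INR 1); auto).
  set (g0 := (2*INR j)*PI/(2*l)). set (g1 := (2*INR j+1)*PI/(2*l)).
  assert (Hin : forall g, g0 <= g <= g1 -> g <> g0 -> g <> g1 ->
     INR j * PI < g*l < INR j * PI + PI/2).
  { intros g Hg H0 H1. assert (g0 < g < g1) by lra.
    pose proof (int_scale l _ _ g hl H). lra. }
  assert (Hg0 : 0 < g0) by (unfold g0; apply Rdiv_lt_0_compat; nra).
  assert (Hg01 : g0 < g1) by (unfold g0, g1; apply Rmult_lt_compat_r;
     [apply Rinv_0_lt_compat; lra | nra]).
  assert (U : forall g g', g0 < g < g1 -> g0 < g' < g1 -> tan(g*l)/g = c ->
            tan(g'*l)/g' = c -> ~ g < g').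
  { intros g g' Hg Hg' E E' Hlt.
    destruct (MVT_cor2 (fun g => tan (g*l) / g)
      (fun g => (g*l*(1+tan (g*l)^2) - tan (g*l))/ g^2) g g' Hlt) as [x [Ec Hc]].
    { intros x Hx. apply D_tang. apply (trig_nz1 j). apply Hin; lra. lra. }
    cbv beta in Ec. rewrite E, E' in Ec.
    assert (Hcl : INR j * PI < x*l < INR j * PI + PI/2) by (apply Hin; lra).
    assert (1 < x*l) by nra.
    set (T := tan (x*l)) in Ec.
    assert (0 <= (x*l-1)*(1+T^2)) by (apply Rmult_le_pos; nra).
    assert (0 < x*l*(1+T^2) - T) by nra.
    assert (0 < (x*l*(1+T^2) - T)/x^2) by (apply Rdiv_lt_0_compat; nra).
    assert (0 < (x*l*(1+T^2) - T)/x^2 * (g' - g)) by (apply Rmult_lt_0_compat; lra).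
    lra. }
  set (F := fun g => sin(g*l) - c*g*cos(g*l)).
  assert (CF : continuity F).
  { apply (cont_of_der _ (fun g => cos(g*l)*l - (c*cos(g*l) - c*g*(sin(g*l)*l)))).
    intro x; apply is_derive_Reals; unfold F; auto_derive; auto; ring. }
  assert (F0 : F g0 = - c * g0 * (-1)^j).
  { unfold F. replace (g0*l) with (0 + INR j * PI) by (unfold g0; field; lra).
    rewrite sin_shift, cos_shift, sin_0, cos_0. ring. }
  assert (F1 : F g1 = (-1)^j).
  { unfold F. replace (g1*l) with (PI/2 + INR j * PI) by (unfold g1; field; lra).
    rewrite sin_shift, cos_shift, sin_PI2, cos_PI2. ring. }
  assert (Hcg : 0 < c * g0) by nra.
  destruct (IVT_gen F g0 g1 0 CF) as [x [Hx Fx]].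
  { rewrite F0, F1. unfold Rmin, Rmax.
    destruct (m1_pow j) as [-> | ->]; destruct Rle_dec; nra. }
  rewrite Rmin_left, Rmax_right in Hx by lra.
  assert (x <> g0) by (intro; subst x; rewrite F0 in Fx; destruct (m1_pow j) as [E|E]; rewrite E in Fx; nra).
  assert (x <> g1) by (intro; subst x; rewrite F1 in Fx; destruct (m1_pow j) as [E|E]; rewrite E in Fx; lra).
  assert (Hxl := Hin x Hx H H0).
  destruct (trig_nz1 j (x*l)) as [Hs Hc]; [lra|].
  assert (Ex : tan (x*l) / x = c).
  { unfold tan. unfold F in Fx.
    replace (sin (x*l)) with (c*x*cos(x*l)) by lra. field; split; auto; lra. }
  exists x. split; [lra|]. split; [exact Ex|].
  intros g' Hg' E'. destruct (Rtotal_order g' x) as [Hl|[He|Hl]]; auto.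
  - exfalso. apply (U g' x); auto; lra.
  - exfalso. apply (U x g'); auto; lra.
Qed.
Lemma D_lin (f f' g g' : R -> R) a : (forall y, derivable_pt_lim f y (f' y)) ->
  (forall y, derivable_pt_lim g y (g' y)) ->
  forall y, derivable_pt_lim (fun y => f y - a * g y) y (f' y - a * g' y).
Proof. intros Hf Hg y.
  exact (derivable_pt_lim_minus f (fun y => a * g y) y _ _ (Hf y) (derivable_pt_lim_scal g a y _ (Hg y))). Qed.

Definition eigen_concl (l lam mR : R) (h : R -> R) : Prop :=
 let u := fun x y => h y * sin (mR * x) in
 (exists x y, u x y <> 0) /\
 (exists L L2, laplacian_is u L /\ laplacian_is L L2 /\
    forall x y, in_Omega l x y -> L2 x y = - lam * L x y) /\
 (forall x y, on_boundary l x y -> u x y = 0) /\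
 (exists uy, dy u uy /\ forall x, 0 < x < PI -> uy x (- l) = 0 /\ uy x l = 0) /\
 (exists ux uxx, dx u ux /\ dx ux uxx /\
    forall y, - l < y < l -> uxx 0 y = 0 /\ uxx PI y = 0) /\
 (exists y, h y <> 0) /\
 (exists h1 h2 h3 h4 : R -> R,
    (forall y, derivable_pt_lim h y (h1 y)) /\
    (forall y, derivable_pt_lim h1 y (h2 y)) /\
    (forall y, derivable_pt_lim h2 y (h3 y)) /\
    (forall y, derivable_pt_lim h3 y (h4 y)) /\
    (forall y, - l < y < l ->
       h4 y + (lam - 2 * mR ^ 2) * h2 y + mR ^ 2 * (mR ^ 2 - lam) * h y = 0) /\
    h (- l) = 0 /\ h l = 0 /\ h1 (- l) = 0 /\ h1 l = 0).

Lemma eigen_generic l lam n (h h1 h2 h3 h4 : R -> R) : (1 <= n)%nat ->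
  (forall y, derivable_pt_lim h y (h1 y)) ->
  (forall y, derivable_pt_lim h1 y (h2 y)) ->
  (forall y, derivable_pt_lim h2 y (h3 y)) ->
  (forall y, derivable_pt_lim h3 y (h4 y)) ->
  (forall y, h4 y + (lam - 2 * INR n ^ 2) * h2 y + INR n ^ 2 * (INR n ^ 2 - lam) * h y = 0) ->
  h (- l) = 0 -> h l = 0 -> h1 (- l) = 0 -> h1 l = 0 -> (exists y, h y <> 0) ->
  eigen_concl l lam (INR n) h.
Proof.
  intros hn D1 D2 D3 D4 ODE Hl1 Hl2 H1l1 H1l2 [y0 Hy0].
  assert (hm : 1 <= INR n) by (apply (le_INR 1); auto).
  set (mR := INR n) in *.
  assert (SP : sin (mR * PI) = 0).
  { unfold mR. replace (INR n * PI) with (0 + INR n * PI) by ring.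
    rewrite sin_shift, sin_0. ring. }
  unfold eigen_concl. cbv beta zeta.
  split; [|split; [|split; [|split; [|split; [|split]]]]].
  - exists (PI/(2*mR)), y0. replace (mR*(PI/(2*mR))) with (PI/2) by (field; lra).
    rewrite sin_PI2, Rmult_1_r. auto.
  - exists (fun x y => (h2 y - mR^2*h y)*sin(mR*x)),
      (fun x y => (h2 y - mR^2 * h y) * (-(mR*mR*sin(mR*x))) + (h4 y - mR^2*h2 y) * sin(mR*x)).
    split; [|split].
    + apply (lap_prod h h1 h2 (fun x => sin(mR*x)) (fun x => mR*cos(mR*x))
             (fun x => -(mR*mR*sin(mR*x)))); auto.
      intro; apply D_sin. intro; apply D_mcos. intros; ring.
    + apply (lap_prod (fun y => h2 y - mR^2*h y) (fun y => h3 y - mR^2*h1 y)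
         (fun y => h4 y - mR^2*h2 y) (fun x => sin(mR*x)) (fun x => mR*cos(mR*x))
             (fun x => -(mR*mR*sin(mR*x)))).
      apply D_lin; auto. apply D_lin; auto.
      intro; apply D_sin. intro; apply D_mcos. intros; ring.
    + intros x y _. pose proof (ODE y) as E.
      replace (h4 y) with (-((lam - 2*mR^2)*h2 y + mR^2*(mR^2-lam)*h y)) by lra.
      ring.
  - intros x y [[[-> | ->] _] | [_ [-> | ->]]].
    + rewrite Rmult_0_r, sin_0; ring.
    + rewrite SP; ring.
    + rewrite Hl1; ring.
    + rewrite Hl2; ring.
  - exists (fun x y => h1 y * sin(mR*x)). split.
    + apply dy_prod; auto.
    + intros x _. rewrite H1l1, H1l2; split; ring.
  - exists (fun x y => h y * (mR*cos(mR*x))), (fun x y => h y * (-(mR*mR*sin(mR*x)))).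
    split; [|split].
    + apply (dx_prod h (fun x => sin (mR*x))). intro; apply D_sin.
    + apply (dx_prod h (fun x => mR*cos(mR*x))). intro; apply D_mcos.
    + intros y _. rewrite Rmult_0_r, sin_0, SP; split; ring.
  - exists y0; auto.
  - exists h1, h2, h3, h4. repeat split; auto.
Qed.
Lemma odd_part l n (hn:(1<=n)%nat) g (hg: 0<g) A
  (HA: A*cos(g*l) = cosh(INR n*l)) (H1: INR n*sinh(INR n*l) + A*g*sin(g*l) = 0) :
  eigen_concl l (INR n^2 + g^2) (INR n) (fun y => cosh(INR n*y) - A*cos(g*y)) /\
  forall y, cosh(INR n*(-y)) - A*cos(g*(-y)) = cosh(INR n*y) - A*cos(g*y).
Proof.
  assert (hm : 1 <= INR n) by (apply (le_INR 1); auto).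
  set (mR := INR n) in *.
  assert (Par : forall y, cosh(mR*(-y)) - A*cos(g*(-y)) = cosh(mR*y) - A*cos(g*y)).
  { intro y. replace (mR*(-y)) with (-(mR*y)) by ring. replace (g*(-y)) with (-(g*y)) by ring.
    rewrite cosh_opp, cos_neg. ring. }
  split; [|exact Par].
  apply (eigen_generic l _ n _
    (fun y => mR*sinh(mR*y) + A*g*sin(g*y))
    (fun y => mR^2*cosh(mR*y) + A*g^2*cos(g*y))
    (fun y => mR^3*sinh(mR*y) - A*g^3*sin(g*y))
    (fun y => mR^4*cosh(mR*y) - A*g^4*cos(g*y))); auto.
  - intro y; apply is_derive_Reals; unfold cosh, sinh; auto_derive; [auto| field].
  - intro y; apply is_derive_Reals; unfold cosh, sinh; auto_derive; [auto| field].
  - intro y; apply is_derive_Reals; unfold cosh, sinh; auto_derive; [auto| field].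
  - intro y; apply is_derive_Reals; unfold cosh, sinh; auto_derive; [auto| field].
  - intro y; fold mR; ring.
  - replace (- l) with (- (l)) by ring. cbv beta. rewrite Par. lra.
  - cbv beta. lra.
  - cbv beta. replace (mR*(-l)) with (-(mR*l)) by ring. replace (g*(-l)) with (-(g*l)) by ring.
    rewrite sinh_opp, sin_neg. lra.
  - exists (PI/(2*g)). replace (g*(PI/(2*g))) with (PI/2) by (field; lra).
    rewrite cos_PI2. pose proof (cosh_pos (mR*(PI/(2*g)))). lra.
Qed.

Lemma even_part l n (hn:(1<=n)%nat) g (hg: 0<g) B
  (HB: B*sin(g*l) = sinh(INR n*l)) (H1: INR n*cosh(INR n*l) - B*g*cos(g*l) = 0) :
  eigen_concl l (INR n^2 + g^2) (INR n) (fun y => sinh(INR n*y) - B*sin(g*y)) /\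
  forall y, sinh(INR n*(-y)) - B*sin(g*(-y)) = - (sinh(INR n*y) - B*sin(g*y)).
Proof.
  assert (hm : 1 <= INR n) by (apply (le_INR 1); auto).
  set (mR := INR n) in *.
  assert (Par : forall y, sinh(mR*(-y)) - B*sin(g*(-y)) = - (sinh(mR*y) - B*sin(g*y))).
  { intro y. replace (mR*(-y)) with (-(mR*y)) by ring. replace (g*(-y)) with (-(g*y)) by ring.
    rewrite sinh_opp, sin_neg. ring. }
  split; [|exact Par].
  apply (eigen_generic l _ n _
    (fun y => mR*cosh(mR*y) - B*g*cos(g*y))
    (fun y => mR^2*sinh(mR*y) + B*g^2*sin(g*y))
    (fun y => mR^3*cosh(mR*y) + B*g^3*cos(g*y))
    (fun y => mR^4*sinh(mR*y) - B*g^4*sin(g*y))); auto.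
  - intro y; apply is_derive_Reals; unfold cosh, sinh; auto_derive; [auto| field].
  - intro y; apply is_derive_Reals; unfold cosh, sinh; auto_derive; [auto| field].
  - intro y; apply is_derive_Reals; unfold cosh, sinh; auto_derive; [auto| field].
  - intro y; apply is_derive_Reals; unfold cosh, sinh; auto_derive; [auto| field].
  - intro y; fold mR; ring.
  - cbv beta. rewrite Par. lra.
  - cbv beta. lra.
  - cbv beta. replace (mR*(-l)) with (-(mR*l)) by ring. replace (g*(-l)) with (-(g*l)) by ring.
    rewrite cosh_opp, cos_neg. lra.
  - exists (PI/g). replace (g*(PI/g)) with PI by (field; lra).
    rewrite sin_PI. assert (0 < mR*(PI/g)) by (apply Rmult_lt_0_compat; [lra| apply Rdiv_lt_0_compat; pose proof PI_RGT_0; lra]).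
    pose proof (sinh_pos _ H). lra.
Qed.
Lemma odd_pos l (hl : 0 < l) mR (hm : 0 < mR) g (hg : 0 < g) A (hA : A < 0)
  (hgl : g * l < PI)
  (HA: A*cos(g*l) = cosh(mR*l)) (H1: mR*sinh(mR*l) + A*g*sin(g*l) = 0) :
  forall y, -l < y < l -> 0 < cosh(mR*y) - A*cos(g*y).
Proof.
  pose (h := fun y => cosh(mR*y) - A*cos(g*y)).
  pose (h1 := fun y => mR*sinh(mR*y) + A*g*sin(g*y)).
  pose (h2 := fun y => mR^2*cosh(mR*y) + A*g^2*cos(g*y)).
  pose (h3 := fun y => mR^3*sinh(mR*y) - A*g^3*sin(g*y)).
  assert (D1 : forall y, derivable_pt_lim h y (h1 y)) by
    (intro y; apply is_derive_Reals; unfold h, h1, cosh, sinh; auto_derive; [auto| field]).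
  assert (D2 : forall y, derivable_pt_lim h1 y (h2 y)) by
    (intro y; apply is_derive_Reals; unfold h1, h2, cosh, sinh; auto_derive; [auto| field]).
  assert (D3 : forall y, derivable_pt_lim h2 y (h3 y)) by
    (intro y; apply is_derive_Reals; unfold h2, h3, cosh, sinh; auto_derive; [auto| field]).
  assert (P3 : forall y, 0 < y < l -> 0 < h3 y).
  { intros y Hy. unfold h3.
    assert (0 < sinh (mR*y)) by (apply sinh_pos; nra).
    assert (0 < sin (g*y)) by (apply sin_gt_0; nra).
    assert (0 < mR^3) by (apply pow_lt; lra).
    assert (0 < g^3) by (apply pow_lt; lra).
    assert (0 < mR^3 * sinh (mR*y)) by (apply Rmult_lt_0_compat; lra).
    assert (0 < (-A)*g^3 * sin (g*y)) by (apply Rmult_lt_0_compat; [apply Rmult_lt_0_compat|]; lra).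
    lra. }
  assert (h10 : h1 0 = 0) by (unfold h1; rewrite Rmult_0_r, Rmult_0_r, sinh_0, sin_0; ring).
  assert (N1 : forall y, 0 < y < l -> h1 y < 0).
  { intros y Hy.
    destruct (MVT_cor2 h1 h2 0 y) as [c1 [E1 Hc1]]; [lra| intros; apply D2|].
    destruct (MVT_cor2 h1 h2 y l) as [c2 [E2 Hc2]]; [lra| intros; apply D2|].
    destruct (MVT_cor2 h2 h3 c1 c2) as [d [E3 Hd]]; [lra| intros; apply D3|].
    assert (0 < h3 d) by (apply P3; lra).
    assert (0 < h3 d * (c2 - c1)) by (apply Rmult_lt_0_compat; lra).
    assert (Eh1l : h1 l = 0) by (unfold h1; lra).
    rewrite h10 in E1. rewrite Eh1l in E2.
    destruct (Rle_or_lt 0 (h2 c1)).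
    - assert (0 < h2 c2 * (l - y)) by (apply Rmult_lt_0_compat; lra). lra.
    - assert (h2 c1 * (y - 0) < 0) by nra. lra. }
  assert (Pp : forall y, 0 < y < l -> 0 < h y).
  { intros y Hy.
    destruct (MVT_cor2 h h1 y l) as [c [E Hc]]; [lra| intros; apply D1|].
    assert (Ehl : h l = 0) by (unfold h; lra).
    assert (h1 c < 0) by (apply N1; lra).
    assert (h1 c * (l - y) < 0) by nra. lra. }
  intros y Hy. change (0 < h y).
  destruct (Rtotal_order y 0) as [Hl|[He|Hl]].
  - replace (h y) with (h (-y)). apply Pp; lra.
    unfold h. replace (mR*(-y)) with (-(mR*y)) by ring. replace (g*(-y)) with (-(g*y)) by ring.
    rewrite cosh_opp, cos_neg. ring.
  - subst y. unfold h. rewrite !Rmult_0_r, cosh_0, cos_0. lra.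
  - apply Pp; lra.
Qed.
Theorem theorem5p1 (l : R) (hl : 0 < l) (k m : nat) (hk : (1 <= k)%nat) (hm : (1 <= m)%nat) :
  exists g : R,
    (INR k * PI / (2 * l) < g < (INR k + 1) * PI / (2 * l)) /\
    gamma_eq k m l g /\
    (forall g', INR k * PI / (2 * l) < g' < (INR k + 1) * PI / (2 * l) ->
                gamma_eq k m l g' -> g' = g) /\
    let lam := INR m ^ 2 + g ^ 2 in
    let h := h_fun k m l g in
    let u := u_fun k m l g in
    (* u is an eigenfunction of the boundary value problem with eigenvalue lam *)
    (exists x y, u x y <> 0) /\
    (exists L L2, laplacian_is u L /\ laplacian_is L L2 /\
       forall x y, in_Omega l x y -> L2 x y = - lam * L x y) /\
    (forall x y, on_boundary l x y -> u x y = 0) /\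
    (exists uy, dy u uy /\ forall x, 0 < x < PI -> uy x (- l) = 0 /\ uy x l = 0) /\
    (exists ux uxx, dx u ux /\ dx ux uxx /\
       forall y, - l < y < l -> uxx 0 y = 0 /\ uxx PI y = 0) /\
    (* h is a nontrivial solution of the fourth-order boundary value problem *)
    (exists y, h y <> 0) /\
    (exists h1 h2 h3 h4 : R -> R,
       (forall y, derivable_pt_lim h y (h1 y)) /\
       (forall y, derivable_pt_lim h1 y (h2 y)) /\
       (forall y, derivable_pt_lim h2 y (h3 y)) /\
       (forall y, derivable_pt_lim h3 y (h4 y)) /\
       (forall y, - l < y < l ->
          h4 y + (lam - 2 * INR m ^ 2) * h2 y + INR m ^ 2 * (INR m ^ 2 - lam) * h y = 0) /\
       h (- l) = 0 /\ h l = 0 /\ h1 (- l) = 0 /\ h1 l = 0) /\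
    (* (a) parity *)
    (if Nat.odd k then forall y, h (- y) = h y else forall y, h (- y) = - h y) /\
    (* (b) positivity for k = 1 *)
    (k = 1%nat -> forall y, - l < y < l -> 0 < h y).
Proof.
  pose proof PI_gt3 as HPI.
  assert (hmR : 1 <= INR m) by (apply (le_INR 1); auto).
  assert (Hml : 0 < INR m * l) by nra.
  pose proof (cosh_pos (INR m * l)) as Hch.
  pose proof (sinh_pos _ Hml) as Hsh.
  assert (Hth : 0 < tanh (INR m * l)) by (unfold tanh; apply Rdiv_lt_0_compat; lra).
  assert (Hchn : cosh (INR m * l) <> 0) by lra.
  assert (Hshn : sinh (INR m * l) <> 0) by lra.
  assert (Hmn : INR m <> 0) by lra.
  destruct (Nat.odd k) eqn:E.
  -
    destruct (proj1 (Nat.odd_spec k) E) as [j Hkj].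
    assert (HK : INR k = 2 * INR j + 1) by (rewrite Hkj, plus_INR, mult_INR; simpl; ring).
    assert (ha : 0 < INR m * tanh (INR m * l)) by nra.
    destruct (gamma_odd l hl j _ ha) as [g [Hg [Eg Ug]]].
    pose proof (pos_INR j) as Hj.
    assert (hg : 0 < g).
    { assert (0 < (2 * INR j + 1) * PI / (2 * l)) by (apply Rdiv_lt_0_compat; nra). lra. }
    pose proof (int_scale l _ _ g hl Hg) as Hgl.
    destruct (trig_nz2 j (g*l)) as [Hs Hc]; [lra|].
    exists g. rewrite HK. split; [exact Hg|]. split.
    { unfold gamma_eq. rewrite E. exact Eg. }
    split.
    { intros g' Hg' Eg'. unfold gamma_eq in Eg'. rewrite E in Eg'. apply Ug; auto. }
    pose (A := cosh (INR m * l) / cos (g * l)).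
    assert (HA : A * cos (g*l) = cosh (INR m * l)) by (unfold A; field; auto).
    assert (H1 : INR m * sinh (INR m * l) + A * g * sin (g * l) = 0).
    { replace (A * g * sin (g*l)) with (cosh (INR m * l) * (g * tan (g*l)))
        by (unfold A, tan; field; auto).
      rewrite Eg. unfold tanh. field. auto. }
    destruct (odd_part l m hm g hg A HA H1) as [EC Par].
    intros lam h u.
    assert (Eh : h = fun y => cosh (INR m*y) - A*cos(g*y))
      by (unfold h, h_fun; rewrite E; reflexivity).
    assert (Eu : u = fun x y => (fun y => cosh (INR m*y) - A*cos(g*y)) y * sin (INR m * x))
      by (unfold u, u_fun, h_fun; rewrite E; reflexivity).
    clearbody h u. subst h u.
    unfold eigen_concl in EC. cbv beta zeta in EC.
    destruct EC as (A1 & A2 & A3 & A4 & A5 & A6 & A7).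
    split; [exact A1|]. split; [exact A2|]. split; [exact A3|]. split; [exact A4|].
    split; [exact A5|]. split; [exact A6|]. split; [exact A7|]. split.
    + intro y. exact (Par y).
    + intros Hk1 y Hy. assert (j = 0%nat) by lia. subst j.
      change (INR 0) with 0 in Hgl.
      assert (cos (g*l) < 0) by (apply cos_lt_0; lra).
      assert (hA : A < 0).
      { unfold A, Rdiv. assert (/ cos (g*l) < 0) by (apply Rinv_lt_0_compat; lra). nra. }
      exact (odd_pos l hl (INR m) ltac:(lra) g hg A hA ltac:(lra) HA H1 y Hy).
  -
    assert (Ev : Nat.even k = true) by (rewrite <- Nat.negb_odd, E; reflexivity).
    destruct (proj1 (Nat.even_spec k) Ev) as [j Hkj].
    assert (hj : (1 <= j)%nat) by lia.
    assert (HK : INR k = 2 * INR j) by (rewrite Hkj, mult_INR; simpl; ring).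
    assert (hc : 0 < tanh (INR m * l) / INR m) by (apply Rdiv_lt_0_compat; lra).
    destruct (gamma_even l hl j hj _ hc) as [g [Hg [Eg Ug]]].
    assert (Hj : 1 <= INR j) by (apply (le_INR 1); auto).
    assert (hg : 0 < g).
    { assert (0 < (2 * INR j) * PI / (2 * l)) by (apply Rdiv_lt_0_compat; nra). lra. }
    assert (hgn : g <> 0) by lra.
    pose proof (int_scale l _ _ g hl Hg) as Hgl.
    destruct (trig_nz1 j (g*l)) as [Hs Hc]; [lra|].
    exists g. rewrite HK. split; [exact Hg|]. split.
    { unfold gamma_eq. rewrite E. exact Eg. }
    split.
    { intros g' Hg' Eg'. unfold gamma_eq in Eg'. rewrite E in Eg'. apply Ug; auto. }
    pose (B := sinh (INR m * l) / sin (g * l)).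
    assert (HB : B * sin (g*l) = sinh (INR m * l)) by (unfold B; field; auto).
    assert (H1 : INR m * cosh (INR m * l) - B * g * cos (g * l) = 0).
    { replace (B * g * cos (g*l)) with (sinh (INR m * l) / (tan (g*l) / g))
        by (unfold B, tan; field; auto).
      rewrite Eg. unfold tanh. field. auto. }
    destruct (even_part l m hm g hg B HB H1) as [EC Par].
    intros lam h u.
    assert (Eh : h = fun y => sinh (INR m*y) - B*sin(g*y))
      by (unfold h, h_fun; rewrite E; reflexivity).
    assert (Eu : u = fun x y => (fun y => sinh (INR m*y) - B*sin(g*y)) y * sin (INR m * x))
      by (unfold u, u_fun, h_fun; rewrite E; reflexivity).
    clearbody h u. subst h u.
    unfold eigen_concl in EC. cbv beta zeta in EC.
    destruct EC as (A1 & A2 & A3 & A4 & A5 & A6 & A7).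
    split; [exact A1|]. split; [exact A2|]. split; [exact A3|]. split; [exact A4|].
    split; [exact A5|]. split; [exact A6|]. split; [exact A7|]. split.
    + intro y. exact (Par y).
    + intros Hk1. lia.
Qed.
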